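(* Assume that for some $\gamma>0$ the sequence $\left(j\lambda_j\log^{1+\gamma}(j\vee2)\right)_{j\ge1}$ is decreasing. Then there exists a constant $C(\gamma)$ depending only on $\gamma$ such that for every integer $k\ge1$, $$\sum_{j\ge1,\,j\ne k}\frac{\lambda_j}{|\lambda_k-\lambda_j|}\le C(\gamma)\,k\left[\log k\vee1\right].$$
   Context: $(\lambda_j)_{j\ge1}$ is the non-increasing sequence of (nonnegative) eigenvalues of the covariance operator $\Gamma h=\mathbb E[\langle h,X\rangle X]$ of a centered square-integrable random element $X$ of a separable Hilbert space. *)

(* Defs.v *)
From HB Require Import structures.
From mathcomp Require Import all_boot all_order all_algebra.
From mathcomp Require Import all_classical all_reals all_analysis.
Set Implicit Arguments. Unset Strict Implicit. Unset Printing Implicit Defensive.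
Import Order.TTheory GRing.Theory Num.Theory.
Local Open Scope ring_scope.

(* The eigenvalue sequence lambda_1 >= lambda_2 >= ... >= 0 (index 0 unused). *)
Definition eigen_seq (R : realType) (lam : nat -> R) : Prop :=
  (forall j, (1 <= j)%N -> 0 <= lam j) /\
  (forall j, (1 <= j)%N -> lam j.+1 <= lam j).

Definition weighted (R : realType) (gamma : R) (lam : nat -> R) (j : nat) : R :=
  j%:R * lam j * (ln (maxn j 2)%:R) `^ (1 + gamma).

(* "decreasing" read as non-increasing for j >= 1 *)
Definition decreasing_from1 (R : realType) (u : nat -> R) : Prop :=
  forall j, (1 <= j)%N -> u j.+1 <= u j.

(* Main.v *)
Require Import Defs.
From HB Require Import structures.
From mathcomp Require Import all_boot all_order all_algebra.
From mathcomp Require Import all_classical all_reals all_analysis.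
From mathcomp Require Import ring lra zify.
Import Order.TTheory GRing.Theory Num.Theory.
Local Open Scope ring_scope.

Set Implicit Arguments. Unset Strict Implicit.


Lemma powR_pos (R : realType) (x y : R) : 0 < x -> x `^ y = expR (y * ln x).
Proof. by move=> x0; rewrite /powR gt_eqF. Qed.

Lemma ln_ge_sub (R : realType) (x y : R) : 0 < x -> 0 < y -> 1 - y / x <= ln x - ln y.
Proof.
move=> x0 y0.
have h := @le_ln1Dx R (y / x - 1).
have : ln (1 + (y / x - 1)) <= y / x - 1.
  apply: h; have : 0 < y / x by rewrite divr_gt0.
  lra.
rewrite addrC subrK lnM ?posrE ?invr_gt0 // lnV ?posrE //.
lra.
Qed.

Lemma div_le (R : realType) (x y c d : R) : 0 < y -> 0 < d -> x * d <= c * y -> x / y <= c / d.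
Proof.
move=> y0 d0 h; rewrite ler_pdivrMr // mulrAC ler_pdivlMr //.
Qed.

Lemma harm (R : realType) (m : nat) :
  \sum_(1 <= i < m.+2) (i%:R : R)^-1 <= 1 + ln (m.+1)%:R.
Proof.
elim: m => [|m IH].
  by rewrite big_nat1 invr1 ln1 addr0.
rewrite big_nat_recr //=.
have h := @ln_ge_sub R (m.+2)%:R (m.+1)%:R (ltr0Sn _ _) (ltr0Sn _ _).
have e : 1 - (m.+1)%:R / (m.+2)%:R = ((m.+2)%:R : R)^-1.
  rewrite -[X in X - _](@divff _ (m.+2)%:R) ?pnatr_eq0 // -mulrBl.
  by rewrite -natrB // subSn // subnn mul1r.
move: IH h e. set S := \sum_(_ <= _ < _) _. set t := _^-1. set u := ln _. set v := ln _. set w := _ / _. lra.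
Qed.


Definition Lf {R : realType} (g : R) (j : nat) : R := ln ((maxn j 2)%:R) `^ (1 + g).

Lemma ln_max_gt0 (R : realType) j : 0 < ln ((maxn j 2)%:R : R).
Proof. by apply: ln_gt0; rewrite ltr1n; apply: leq_trans (leq_maxr _ _). Qed.

Lemma Lf_gt0 (R : realType) (g : R) j : 0 < Lf g j.
Proof. exact/powR_gt0/ln_max_gt0. Qed.

Lemma Lf_mono (R : realType) (g : R) i j : 0 < g -> (i <= j)%N -> Lf g i <= Lf g j.
Proof.
move=> g0 ij; rewrite /Lf; apply: ge0_ler_powR.
- lra.
- by rewrite nnegrE ltW // ln_max_gt0.
- by rewrite nnegrE ltW // ln_max_gt0.
rewrite ler_ln ?posrE ?ltr0n ?(leq_trans _ (leq_maxr _ _)) // ler_nat.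
by rewrite geq_max !leq_max ij leqnn !orbT.
Qed.

Lemma u_mono {R : realType} {u : nat -> R} : (forall j, (1 <= j)%N -> u j.+1 <= u j) ->
  forall i j, (1 <= i)%N -> (i <= j)%N -> u j <= u i.
Proof.
move=> h i j i1; elim: j => [|j IH]; first by rewrite leqn0 => /eqP ->.
rewrite leq_eqVlt => /orP[/eqP -> //|]; rewrite ltnS => ij.
apply: le_trans (IH ij); apply: h; exact: leq_trans ij.
Qed.

Lemma key (R : realType) (g : R) (lam : nat -> R) : 0 < g -> eigen_seq lam ->
  decreasing_from1 (weighted g lam) ->
  forall i j, (1 <= i)%N -> (i <= j)%N -> j%:R * lam j <= i%:R * lam i.
Proof.
move=> g0 [l0 lm] wd i j i1 ij.
have wij := u_mono wd i1 ij.
rewrite /weighted -/(Lf g j) -/(Lf g i) in wij.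
have Lij := Lf_mono g0 ij.
have Lj := Lf_gt0 g j.
have pi : 0 <= i%:R * lam i by rewrite mulr_ge0 // l0.
rewrite -(ler_pM2r Lj); apply: le_trans wij _.
exact: ler_wpM2l.
Qed.


Definition ff {R : realType} (lam : nat -> R) (k j : nat) : R := lam j / `|lam k - lam j|.

Lemma lam_mono (R : realType) (lam : nat -> R) : eigen_seq lam ->
  forall i j, (1 <= i)%N -> (i <= j)%N -> lam j <= lam i.
Proof. by move=> [_ lm]; apply: u_mono. Qed.

Lemma ff_ge0 (R : realType) (lam : nat -> R) k j : eigen_seq lam -> (1 <= j)%N -> 0 <= ff lam k j.
Proof. by move=> [l0 _] j1; rewrite /ff divr_ge0 // l0. Qed.

Lemma PA (R : realType) (g : R) (lam : nat -> R) : 0 < g -> eigen_seq lam ->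
  decreasing_from1 (weighted g lam) -> forall k j, (1 <= j)%N -> (j < k)%N ->
  ff lam k j <= k%:R / (k - j)%:R.
Proof.
move=> g0 el wd k j j1 jk.
have kj := key g0 el wd j1 (ltnW jk).
have lkj := lam_mono el j1 (ltnW jk).
have kjpos : 0 < (k - j)%:R :> R by rewrite ltr0n subn_gt0.
have kpos : 0 < k%:R :> R by rewrite ltr0n (leq_trans j1 (ltnW jk)).
rewrite /ff; case: (eqVneq (lam k) (lam j)) => [->|ne].
  by rewrite subrr normr0 invr0 mulr0 divr_ge0 // ltW.
have lt : lam k < lam j by rewrite lt_neqAle ne.
rewrite ler0_norm; last by lra.
apply: div_le => //; first by lra.
rewrite natrB; last exact: ltnW.
move: kj; set a := lam j; set b := lam k; set x := k%:R; set y := j%:R.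
move=> kj; nra.
Qed.

Lemma PB (R : realType) (g : R) (lam : nat -> R) : 0 < g -> eigen_seq lam ->
  decreasing_from1 (weighted g lam) -> forall k j, (1 <= k)%N -> (k < j)%N ->
  ff lam k j <= j%:R / (j - k)%:R.
Proof.
move=> g0 el wd k j k1 kj.
have jk := key g0 el wd k1 (ltnW kj).
have lkj := lam_mono el k1 (ltnW kj).
have j1 : (1 <= j)%N by apply: leq_trans k1 (ltnW kj).
have lj0 : 0 <= lam j by case: el => l0 _; apply: l0.
have kjpos : 0 < (j - k)%:R :> R by rewrite ltr0n subn_gt0.
have jpos : 0 < j%:R :> R by rewrite ltr0n.
rewrite /ff; case: (eqVneq (lam k) (lam j)) => [->|ne].
  by rewrite subrr normr0 invr0 mulr0 divr_ge0 // ltW.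
have lt : lam j < lam k by rewrite lt_neqAle eq_sym ne.
rewrite ger0_norm; last by lra.
apply: div_le => //; first by lra.
rewrite natrB; last exact: ltnW.
have t1 : lam j * (j%:R - k%:R) <= lam k * (j%:R - k%:R).
  apply: ler_wpM2r => //; rewrite -natrB ?ltW // ltnW //.
move: jk t1; set a := lam j; set b := lam k; set x := k%:R; set y := j%:R.
move=> jk t1; nra.
Qed.

Lemma PC (R : realType) (g : R) (lam : nat -> R) : 0 < g -> eigen_seq lam ->
  decreasing_from1 (weighted g lam) -> forall k j, (1 <= k)%N -> (k.*2 <= j)%N ->
  ff lam k j <= 2 * (k%:R * Lf g k) / (j%:R * Lf g j).
Proof.
move=> g0 el wd k j k1 kj.
have kj' : (k <= j)%N by apply: leq_trans kj; rewrite -addnn leq_addr.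
have jk := key g0 el wd k1 kj'.
have lkj := lam_mono el k1 kj'.
have j1 : (1 <= j)%N by apply: leq_trans k1 kj'.
have lj0 : 0 <= lam j by case: el => l0 _; apply: l0.
have jpos : 0 < j%:R :> R by rewrite ltr0n.
have kpos : 0 < k%:R :> R by rewrite ltr0n.
have Lk := Lf_gt0 g k; have Lj := Lf_gt0 g j.
have den : 0 < j%:R * Lf g j by rewrite mulr_gt0.
have num : 0 < 2 * (k%:R * Lf g k) by rewrite mulr_gt0 // mulr_gt0.
rewrite /ff; case: (eqVneq (lam k) (lam j)) => [->|ne].
  by rewrite subrr normr0 invr0 mulr0 divr_ge0 // ltW.
have lt : lam j < lam k by rewrite lt_neqAle eq_sym ne.
rewrite ger0_norm; last by lra.
have wkj := u_mono wd k1 kj'.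
rewrite /weighted -/(Lf g j) -/(Lf g k) in wkj.
have two : 2 * k%:R <= j%:R :> R by rewrite -natrM ler_nat mul2n.
have h2 : 2 * lam j <= lam k.
  have : k%:R * (2 * lam j) <= k%:R * lam k.
    apply: le_trans jk; rewrite mulrA; apply: ler_wpM2r => //.
    by rewrite mulrC.
  move: kpos; set x := k%:R; set a := lam j; set b := lam k; move=> kp h; nra.
apply: (@le_trans _ _ (2 * lam j / lam k)).
  apply: div_le; [lra | lra |].
  have : 0 <= lam j * (lam k - 2 * lam j) by rewrite mulr_ge0 //; lra.
  move: h2; set a := lam j; set b := lam k => h2 h3; nra.
apply: div_le => //; first by lra.
move: wkj; set a := lam j; set b := lam k; set x := k%:R; set y := j%:R.
set p := Lf g j; set q := Lf g k => wkj; nra.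
Qed.


Definition Fg {R : realType} (g : R) (i : nat) : R := ln (i%:R) `^ (- g).

Lemma one_sub_div (R : realType) (a b : R) : 0 < b -> 1 - a / b = (b - a) / b.
Proof. by move=> b0; rewrite mulrBl divff ?gt_eqF. Qed.

Lemma PT (R : realType) (g : R) (j : nat) : 0 < g -> (3 <= j)%N ->
  (j%:R * Lf g j)^-1 <= (Fg g j.-1 - Fg g j) / g.
Proof.
move=> g0 j3.
have jpos : 0 < j%:R :> R by rewrite ltr0n (leq_trans _ j3).
have j1pos : 0 < (j.-1)%:R :> R by rewrite ltr0n -ltnS prednK // (leq_trans _ j3).
have jm : maxn j 2 = j by apply/maxn_idPl; apply: leq_trans j3.
have b0 : 0 < ln (j%:R : R) by apply: ln_gt0; rewrite ltr1n (leq_trans _ j3).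
have a0 : 0 < ln ((j.-1)%:R : R).
  by apply: ln_gt0; rewrite ltr1n -ltnS prednK // (leq_trans _ j3).
rewrite /Lf /Fg jm !powR_pos //.
set b := ln (j%:R : R); set a := ln ((j.-1)%:R : R).
set E := expR (g * ln b).
have E0 : 0 < E by apply: expR_gt0.
have eL : expR ((1 + g) * ln b) = b * E by rewrite mulrDl mul1r expRD lnK.
have eF : expR (- g * ln b) = E^-1 by rewrite mulNr expRN.
rewrite eL eF.
have h1 := ln_ge_sub jpos j1pos.
have e1 : 1 - (j.-1)%:R / j%:R = (j%:R : R)^-1.
  move: j3 jpos j1pos; case: (j) => [//|m] _ jp mp /=.
  by rewrite one_sub_div // -natrB // subSnn mul1r.
rewrite e1 -/b -/a in h1.
have h2 := ln_ge_sub b0 a0.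
rewrite one_sub_div // in h2.
set D := ln b - ln a in h2 *.
have hD : (j%:R * b)^-1 <= D.
  apply: le_trans h2; rewrite invfM; apply: ler_wpM2r; first by rewrite invr_ge0 ltW.
  exact: h1.
have hF : E^-1 * (1 + g * D) <= expR (- g * ln a).
  have -> : - g * ln a = - g * ln b + g * D by rewrite /D; ring.
  rewrite expRD eF; apply: ler_wpM2l; first by rewrite invr_ge0 ltW.
  exact: expR_ge1Dx.
have eq : (j%:R * (b * E))^-1 = E^-1 * (j%:R * b)^-1.
  by rewrite mulrA invfM mulrC.
rewrite eq ler_pdivlMr //.
have e0 : 0 < E^-1 by rewrite invr_gt0.
have hp : 0 <= E^-1 * g * (D - (j%:R * b)^-1).
  by apply: mulr_ge0; [apply: mulr_ge0; apply: ltW | rewrite subr_ge0].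
move: hF hp.
set e := E^-1; set t := (j%:R * b)^-1; set u := expR _.
move=> hF hp; lra.
Qed.


Lemma ln2_le1 (R : realType) : ln (2%:R : R) <= 1.
Proof. have e : (2%:R : R) = 1 + 1 by rewrite -natr1. by rewrite e; apply: le_ln1Dx; lra. Qed.

Lemma LF (R : realType) (g : R) (k : nat) : 0 < g -> (1 <= k)%N ->
  Lf g k * Fg g (k.*2.+1) <= ln ((maxn k 2)%:R).
Proof.
move=> g0 k1.
have c0 := @ln_max_gt0 R k.
have kk : (maxn k 2 <= k.*2.+1)%N by rewrite geq_max; lia.
have d0 : 0 < ln ((k.*2.+1)%:R : R) by apply: ln_gt0; rewrite ltr1n; lia.
have cd : ln ((maxn k 2)%:R : R) <= ln ((k.*2.+1)%:R).
  rewrite ler_ln ?posrE ?ltr0n ?ler_nat //; lia.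
rewrite /Lf /Fg !powR_pos //.
set c := ln ((maxn k 2)%:R : R) in c0 cd *; set d := ln _ in d0 cd *.
have : ln c <= ln d by rewrite ler_ln.
rewrite -expRD -{3}(lnK c0) ler_expR => h.
have : 0 <= g * (ln d - ln c) by apply: mulr_ge0; [apply: ltW | rewrite subr_ge0].
set x := ln c; set y := ln d; move=> hh; nra.
Qed.

Lemma Mfacts (R : realType) (k : nat) : (1 <= k)%N ->
  let M := Num.max (ln (k%:R : R)) 1 in
  [/\ 1 <= M, ln (k%:R : R) <= M, ln ((maxn k 2)%:R : R) <= M & ln ((k.+1)%:R : R) <= 2 * M].
Proof.
move=> k1 M.
have h1 : 1 <= M by rewrite /M le_max lexx orbT.
have h2 : ln (k%:R : R) <= M by rewrite /M le_max lexx.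
have l2 := @ln2_le1 R.
split => //.
  case: (leqP k 2) => hk.
    lra.
  by [] || lra.
have : ln ((k.+1)%:R : R) <= ln (2%:R : R) + ln (k%:R : R).
  rewrite -lnM ?posrE ?ltr0n // -natrM ler_ln ?posrE ?ltr0n ?ler_nat //; lia.
lra.
Qed.


Lemma sum_ge0_nat (R : realType) (f : nat -> R) (P : pred nat) m n :
  (forall j, (m <= j)%N -> 0 <= f j) -> 0 <= \sum_(m <= j < n | P j) f j.
Proof.
move=> f0; rewrite big_nat_cond; apply: sumr_ge0 => i /andP[/andP[hi _] _].
exact: f0.
Qed.

Lemma sum_mono_n (R : realType) (f : nat -> R) (P : pred nat) m n N : (n <= N)%N ->
  (forall j, (m <= j)%N -> 0 <= f j) ->
  \sum_(m <= j < n | P j) f j <= \sum_(m <= j < N | P j) f j.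
Proof.
move=> nN f0; case: (leqP m n) => mn.
  rewrite (@big_cat_nat _ _ _ n m N) //= lerDl; apply: sum_ge0_nat => j hj.
  apply: f0; lia.
by rewrite big_geq ?(ltnW mn) //; apply: sum_ge0_nat.
Qed.

Lemma sum_cond_le (R : realType) (f g : nat -> R) (P : pred nat) m n :
  (forall j, (m <= j < n)%N -> P j -> f j <= g j) ->
  (forall j, (m <= j < n)%N -> 0 <= g j) ->
  \sum_(m <= j < n | P j) f j <= \sum_(m <= j < n) g j.
Proof.
move=> fg g0; rewrite big_mkcond /=; apply: ler_sum_nat => j hj.
by case: ifP => Pj; [apply: fg | apply: g0].
Qed.

Lemma regA (R : realType) (k : nat) : (1 <= k)%N ->
  \sum_(1 <= j < k) (k%:R / (k - j)%:R : R) <= k%:R * (1 + ln k%:R).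
Proof.
move=> k1.
rewrite big_nat_rev /=.
rewrite (@eq_big_nat _ _ _ 1 k _ (fun i => k%:R / i%:R)); last first.
  move=> i /andP[i1 ik]; congr (_ / _%:R); lia.
apply: (@le_trans _ _ (\sum_(1 <= j < k.+1) (k%:R / j%:R : R))).
  apply: sum_mono_n => // j j1; rewrite divr_ge0 //.
rewrite -mulr_sumr ler_wpM2l //.
by case: k k1 => // m _; apply: harm.
Qed.

Lemma regB (R : realType) (k : nat) :
  \sum_(k.+1 <= j < k.*2.+2) ((k.*2.+1)%:R / (j - k)%:R : R)
    <= (k.*2.+1)%:R * (1 + ln (k.+1)%:R).
Proof.
rewrite -add1n big_addn.
have -> : (k.*2.+2 - k = k.+2)%N by lia.
rewrite (@eq_big_nat _ _ _ 1 k.+2 _ (fun i => (k.*2.+1)%:R / i%:R)); last first.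
  by move=> i _; rewrite addnK.
by rewrite -mulr_sumr ler_wpM2l //; apply: harm.
Qed.

Lemma regC (R : realType) (g : R) (k N : nat) : 0 < g -> (1 <= k)%N -> (k.*2.+2 <= N)%N ->
  \sum_(k.*2.+2 <= j < N) (2 * (k%:R * Lf g k) * ((Fg g j.-1 - Fg g j) / g))
    <= 2 * k%:R / g * ln ((maxn k 2)%:R).
Proof.
move=> g0 k1 kN.
rewrite (@telescope_sumr_eq _ _ _ (fun i => - (2 * (k%:R * Lf g k)) / g * Fg g i.-1)) //; last first.
  by move=> i _ /=; ring.
have hF : 0 <= Fg g N.-1 by apply: powR_ge0.
have hL := LF g0 k1.
have hc : 0 <= 2 * (k%:R * Lf g k) / g.
  apply: divr_ge0; last exact: ltW.
  apply: mulr_ge0 => //; apply: mulr_ge0 => //; exact: ltW (Lf_gt0 g k).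
have e : (2 * k%:R / g * ln ((maxn k 2)%:R) : R) >=
   2 * (k%:R * Lf g k) / g * Fg g (k.*2.+1).
  have -> : 2 * (k%:R * Lf g k) / g * Fg g (k.*2.+1) =
     (2 * k%:R / g) * (Lf g k * Fg g (k.*2.+1)) by ring.
  apply: ler_wpM2l => //.
  by apply: divr_ge0; [apply: mulr_ge0 | exact: ltW].
simpl.
move: e hF hc; set a := Fg g N.-1; set b := Fg g (k.*2.+1).
set c := 2 * (k%:R * Lf g k) / g; set d := 2 * k%:R / g * _.
move=> e hF hc.
have : 0 <= c * a by apply: mulr_ge0.
rewrite /c; move: e; rewrite /c.
set q := 2 * _ ; move=> e ca.
rewrite !mulNr; lra.
Qed.

Lemma partial (R : realType) (g : R) (lam : nat -> R) : 0 < g -> eigen_seq lam ->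
  decreasing_from1 (weighted g lam) -> forall k, (1 <= k)%N -> forall n,
  \sum_(1 <= j < n | j != k) ff lam k j <= (12 + 2 / g) * k%:R * Num.max (ln k%:R) 1.
Proof.
move=> g0 el wd k k1 n.
set N := maxn n (k.*2.+2).
have f0 : forall j, (1 <= j)%N -> 0 <= ff lam k j by move=> j j1; apply: ff_ge0.
apply: le_trans (sum_mono_n _ (leq_maxl n (k.*2.+2)) f0) _.
have kN : (k.*2.+2 <= N)%N by apply: leq_maxr.
rewrite (@big_cat_nat _ _ _ k 1 N) //; last by lia.
rewrite (@big_cat_nat _ _ _ k.*2.+2 k N) //; last by lia.
rewrite (@big_ltn_cond _ _ _ k) /=; last by lia.
rewrite eqxx /=.
have kpos : 0 < k%:R :> R by rewrite ltr0n.
have hA : \sum_(1 <= j < k | j != k) ff lam k j <= k%:R * (1 + ln k%:R).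
  apply: le_trans (regA R k1).
  apply: sum_cond_le => [j /andP[j1 jk] _|j _]; first exact: (PA g0 el wd j1 jk).
  by rewrite divr_ge0.
have hB : \sum_(k.+1 <= j < k.*2.+2 | j != k) ff lam k j
    <= (k.*2.+1)%:R * (1 + ln (k.+1)%:R).
  apply: le_trans (regB R k).
  apply: sum_cond_le => [j /andP[j1 jk] _|j _]; last by rewrite divr_ge0.
  apply: le_trans (PB g0 el wd k1 j1) _.
  apply: ler_wpM2r; first by rewrite invr_ge0.
  by rewrite ler_nat; lia.
have hC : \sum_(k.*2.+2 <= j < N | j != k) ff lam k j
    <= 2 * k%:R / g * ln ((maxn k 2)%:R).
  apply: le_trans (regC g0 k1 kN).
  have hPT : forall j, (k.*2.+2 <= j)%N ->
      (j%:R * Lf g j)^-1 <= (Fg g j.-1 - Fg g j) / g.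
    by move=> j hj; apply: PT => //; lia.
  have hc : 0 <= 2 * (k%:R * Lf g k).
    by apply: mulr_ge0 => //; apply: mulr_ge0 => //; exact: ltW (Lf_gt0 g k).
  apply: sum_cond_le => [j /andP[j1 jk] _|j /andP[j1 _]].
    apply: le_trans (PC g0 el wd k1 (_ : (k.*2 <= j)%N)) _; first by lia.
    by apply: ler_wpM2l => //; apply: hPT.
  apply: mulr_ge0 => //; apply: le_trans (hPT j j1).
  by rewrite invr_ge0 mulr_ge0 // ltW // Lf_gt0.
have [M1 M2 M3 M4] := Mfacts R k1.
set M := Num.max _ _ in M1 M2 M3 M4 *.
have t1 : k%:R * (1 + ln k%:R) <= k%:R * (2 * M).
  by apply: ler_wpM2l => //; lra.
have t2 : (k.*2.+1)%:R * (1 + ln (k.+1)%:R) <= (3 * k%:R) * (3 * M).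
  apply: ler_pM.
  - by [].
  - have : 0 <= ln ((k.+1)%:R : R) by apply: ln_ge0; rewrite ler1n.
    lra.
  - rewrite -natrM ler_nat; lia.
  - lra.
have t3 : 2 * k%:R / g * ln ((maxn k 2)%:R) <= 2 * k%:R / g * M.
  apply: ler_wpM2l => //; apply: divr_ge0; [apply: mulr_ge0 => // | exact: ltW].
move: hA hB hC t1 t2 t3.
set x := k%:R; set y := (k.*2.+1)%:R.
set A := \sum_(1 <= j < k | j != k) _.
set B := \sum_(k.+1 <= j < _ | _) _.
set C := \sum_(k.*2.+2 <= j < N | _) _.
set l1 := ln x; set l2 := ln _; set l3 := ln _.
move=> hA hB hC t1 t2 t3.
rewrite mulrDl mulrDl.
have hxM : 0 <= x * M by apply: mulr_ge0; [exact: ler0n | lra].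
lra.
Qed.

Unset Implicit Arguments. Set Strict Implicit.

Theorem lemma10p1 (R : realType) (gamma : R) (hgamma : 0 < gamma) :
  exists C : R, forall lam : nat -> R,
    eigen_seq lam ->
    decreasing_from1 (weighted gamma lam) ->
    forall k : nat, (1 <= k)%N ->
      (\sum_(1 <= j <oo | j != k) (lam j / `|lam k - lam j|)%:E
        <= (C * k%:R * Num.max (ln k%:R) 1)%:E)%E.
Proof.
exists (12 + 2 / gamma) => lam el wd k k1.
have h0 : forall n, (1 <= n)%N -> n != k -> (0 <= (lam n / `|lam k - lam n|)%:E)%E.
  by move=> n n1 _; rewrite lee_fin; exact: (ff_ge0 k el n1).
apply: (lime_le (is_cvg_nneseries h0)); apply: nearW => n.
rewrite sumEFin lee_fin.
exact: (partial hgamma el wd k1 n).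
Qed.
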